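(* Let $A \subseteq B$ be an integral extension of commutative rings, and suppose that $B$ is sublocalizable. Then $A$ is sublocalizable, with unique local subring (its sublocalization) $[1]^{A^\times}_A = [1]^{B^\times}_B \cap A$, which has maximal ideal $J(A) = J(B) \cap A$ and units $A^\times = B^\times \cap A$.
   Context: $A^\times$ is the unit group and $J(A)$ the Jacobson radical. A commutative ring $A$ is sublocalizable if it is nontrivial and $u+v\in A^\times\cup J(A)$ for all $u,v\in A^\times$; its sublocalization is the local subring $A^\times\cup J(A)$. For $T\subseteq A$, $[1]^T_A$ is the smallest additive subgroup $F$ of $A$ containing $1$ such that $ta\in F$ with $t\in T$, $a\in A$ implies $a\in F$; $[1]^{A^\times}_A$ equals the subring of $A$ generated by $A^\times$. *)

(* Defs.v *)
From HB Require Import structures.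
From mathcomp Require Import all_boot all_order all_algebra.
Set Implicit Arguments. Unset Strict Implicit. Unset Printing Implicit Defensive.
Import GRing.Theory.
Local Open Scope ring_scope.

Section RingNotions.
Variable R : comNzRingType.

Definition is_unit (x : R) : Prop := exists y : R, x * y = 1.

Definition is_ideal (I : R -> Prop) : Prop :=
  [/\ I 0, (forall x y, I x -> I y -> I (x + y)) & (forall r x, I x -> I (r * x))].

Definition is_maximal_ideal (M : R -> Prop) : Prop :=
  [/\ is_ideal M, ~ M 1 &
      forall I : R -> Prop, is_ideal I -> (forall x, M x -> I x) ->
        I 1 \/ (forall x, I x -> M x)].

Definition jacobson (x : R) : Prop :=
  forall M : R -> Prop, is_maximal_ideal M -> M x.

Definition sublocalizable : Prop :=
  (1 != 0 :> R) /\
  forall u v : R, is_unit u -> is_unit v -> is_unit (u + v) \/ jacobson (u + v).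

Definition sublocalization (x : R) : Prop := is_unit x \/ jacobson x.

Definition one_closed (T : R -> Prop) (F : R -> Prop) : Prop :=
  [/\ F 0, F 1, (forall x y, F x -> F y -> F (x - y)) &
      (forall t a, T t -> F (t * a) -> F a)].

(* [1]^T_R : the smallest such F (intersection of all of them) *)
Definition one_hull (T : R -> Prop) (x : R) : Prop :=
  forall F : R -> Prop, one_closed T F -> F x.

Definition subring_pred (S : R -> Prop) : Prop :=
  [/\ S 0, S 1, (forall x y, S x -> S y -> S (x - y)) &
      (forall x y, S x -> S y -> S (x * y))].

Definition local_subring_with_max (S m : R -> Prop) : Prop :=
  subring_pred S /\
  forall x, S x -> ((~ exists y, S y /\ x * y = 1) <-> m x).

End RingNotions.

Definition integral_over (A B : comNzRingType) (f : A -> B) : Prop :=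
  forall b : B, exists p : {poly A}, p \is monic /\ root (map_poly f p) b.

(* Main.v *)
Require Import Defs.
From HB Require Import structures.
From mathcomp Require Import all_boot all_order all_algebra.
From mathcomp Require classical_sets.
From Stdlib Require Import Classical.
Set Implicit Arguments. Unset Strict Implicit.
Import GRing.Theory.
Local Open Scope ring_scope.

Section Gen.
Variable R : comNzRingType.

Lemma ideal_opp (I : R -> Prop) x : is_ideal I -> I x -> I (- x).
Proof. case=> _ _ Hm Hx. rewrite -mulN1r. exact: Hm. Qed.

Lemma ideal_sub (I : R -> Prop) x y : is_ideal I -> I x -> I y -> I (x - y).
Proof. move=> HI Hx Hy; case: (HI) => _ Ha _; apply: Ha => //; exact: ideal_opp. Qed.

Lemma ideal_mulr (I : R -> Prop) x r : is_ideal I -> I x -> I (x * r).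
Proof. case=> _ _ Hm Hx; rewrite mulrC; exact: Hm. Qed.

Lemma ideal_unit_one (I : R -> Prop) u : is_ideal I -> I u -> is_unit u -> I 1.
Proof. move=> HI Hu [v uv]; rewrite -uv; exact: ideal_mulr. Qed.

Lemma jacobson_ideal : is_ideal (@jacobson R).
Proof.
split.
- by move=> M [[H0 _ _] _ _].
- by move=> x y Hx Hy M HM; case: (HM) => [[_ Ha _] _ _]; apply: Ha; [apply: Hx|apply: Hy].
- by move=> r x Hx M HM; case: (HM) => [[_ _ Hm] _ _]; apply: Hm; apply: Hx.
Qed.

Lemma exists_max (y : R) : ~ is_unit y -> exists M, is_maximal_ideal M /\ M y.
Proof.
move=> ny.
pose P := fun I : R -> Prop => [/\ ~ I 1, (forall x z, I x -> I z -> I (x + z)),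
   (forall r x, I x -> I (r * x)) & (forall x, I x -> I y)].
have [|A [[A1 Aa Am Ay] Amax]] := @classical_sets.Zorn_bigcup R P.
  move=> F FP Ftot; split.
  - by case=> X FX X1; case: (FP X FX) => /(_ X1).
  - move=> x z [X FX Xx] [Z FZ Zz].
    case: (Ftot X Z FX FZ) => [XZ|ZX].
    + exists Z => //; case: (FP Z FZ) => _ Ha _ _; apply: Ha => //; exact: XZ.
    + exists X => //; case: (FP X FX) => _ Ha _ _; apply: Ha => //; exact: ZX.
  - move=> r x [X FX Xx]; exists X => //; case: (FP X FX) => _ _ Hm _; exact: Hm.
  - move=> x [X FX Xx]; exists X => //; case: (FP X FX) => _ _ _ Hy; exact: Hy Xx.
have Ay' : A y.
  apply: NNPP => nAy.
  apply: (Amax (fun z => exists r, z = r * y)).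
  - split.
    + by move=> x Ax; exfalso; apply: nAy; exact: Ay Ax.
    + by move=> H; apply: nAy; apply: H; exists 1; rewrite mul1r.
  - split.
    + by case=> r r1; apply: ny; exists r; rewrite mulrC -r1.
    + by move=> x z [r ->] [s ->]; exists (r + s); rewrite mulrDl.
    + by move=> s x [r ->]; exists (s * r); rewrite mulrA.
    + by move=> x _; exists 1; rewrite mul1r.
exists A; split => //; split => //.
- split => //; rewrite -(mul0r y); exact: Am.
- move=> I HI AI; case: (classic (I 1)) => [|nI1]; first by left.
  right => x Ix; apply: NNPP => nAx.
  case: (HI) => _ Ia Im.
  apply: (Amax I); last by split => // z _; exact: AI.
  split => // H; exact: nAx (H x Ix).
Qed.

Lemma unit_add_jac (u j : R) : is_unit u -> jacobson j -> is_unit (u + j).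
Proof.
move=> Hu Hj; apply: NNPP => nu.
have [M [HM Muj]] := exists_max nu.
case: (HM) => HI M1 _.
apply: M1; apply: (ideal_unit_one HI _ Hu).
have -> : u = (u + j) - j by rewrite addrK.
apply: ideal_sub => //; exact: Hj.
Qed.

Lemma jac_not_unit (x : R) : jacobson x -> ~ is_unit x.
Proof.
move=> Hx Hu.
have n0 : ~ is_unit (0:R).
  by case=> y; rewrite mul0r => /eqP; rewrite eq_sym oner_eq0.
have [M [HM _]] := exists_max n0.
case: (HM) => HI M1 _; apply: M1; exact: ideal_unit_one HI (Hx M HM) Hu.
Qed.

Lemma unit_mul (u v : R) : is_unit u -> is_unit v -> is_unit (u * v).
Proof. by case=> a ua [b vb]; exists (a * b); rewrite mulrACA ua vb mulr1. Qed.

Lemma unit_opp (u : R) : is_unit u -> is_unit (- u).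
Proof. by case=> a ua; exists (- a); rewrite mulrNN. Qed.

Lemma unit1 : is_unit (1 : R).
Proof. by exists 1; rewrite mulr1. Qed.

Lemma jac0 : jacobson (0 : R).
Proof. by case: jacobson_ideal. Qed.

Hypothesis HR : sublocalizable R.

Lemma subloc_sub (x y : R) : sublocalization x -> sublocalization y -> sublocalization (x - y).
Proof.
case: HR => _ Hs.
case=> [Ux|Jx] [Uy|Jy].
- exact: Hs Ux (unit_opp Uy).
- left; apply: unit_add_jac => //; exact: ideal_opp jacobson_ideal Jy.
- left; rewrite addrC; apply: unit_add_jac; [exact: unit_opp|exact: Jx].
- right; exact: ideal_sub jacobson_ideal Jx Jy.
Qed.

Lemma subloc_mul (x y : R) : sublocalization x -> sublocalization y -> sublocalization (x * y).
Proof.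
case=> [Ux|Jx] [Uy|Jy].
- by left; apply: unit_mul.
- by right; case: jacobson_ideal => _ _ Hm; apply: Hm.
- by right; exact: (ideal_mulr _ jacobson_ideal Jx).
- by right; case: jacobson_ideal => _ _ Hm; apply: Hm.
Qed.

Lemma subloc_ring : local_subring_with_max (@sublocalization R) (@jacobson R).
Proof.
split.
  split; [right; exact: jac0|left; exact: unit1|exact: subloc_sub|exact: subloc_mul].
move=> x Sx; split.
- move=> nex; case: Sx => // Ux; exfalso; apply: nex; case: Ux => y xy.
  exists y; split => //; left; exists x; by rewrite mulrC.
- move=> Jx [y [_ xy]]; apply: (jac_not_unit Jx); by exists y.
Qed.

Lemma subloc_hull (x : R) : sublocalization x <-> one_hull (@is_unit R) x.
Proof.
have hU : forall F, one_closed (@is_unit R) F -> forall u, is_unit u -> F u.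
  move=> F [F0 F1 Fs Ft] u [v uv]; apply: (Ft v).
    by exists u; rewrite mulrC.
  by rewrite mulrC uv.
split.
- case=> [Ux|Jx] F HF; first exact: hU.
  have U1 := unit_add_jac unit1 Jx.
  have -> : x = (1 + x) - 1 by rewrite addrAC subrr add0r.
  case: (HF) => _ F1 Fs _; apply: Fs => //; exact: hU.
- move=> H; apply: H; split.
  + right; exact: jac0.
  + left; exact: unit1.
  + exact: subloc_sub.
  + move=> t a [s ts] [Uta|Jta].
    * left; case: Uta => w taw; exists (t * w); by rewrite mulrA [a * t]mulrC.
    * right; have -> : a = s * (t * a) by rewrite mulrA [s * t]mulrC ts mul1r.
      by case: jacobson_ideal => _ _ Hm; apply: Hm.
Qed.

End Gen.

Section Integral.
Variables (A B : comNzRingType) (f : {rmorphism A -> B}).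
Hypothesis finj : injective f.
Hypothesis fint : integral_over f.

Lemma ideal_sum (N : B -> Prop) n (F : 'I_n -> B) :
  is_ideal N -> (forall i, N (F i)) -> N (\sum_(i < n) F i).
Proof.
move=> [N0 Na _] HF; apply: (big_ind N) => //; exact: Na.
Qed.

Lemma key (N : B -> Prop) (c : A) (d : B) :
  is_ideal N -> N (f c * d - 1) -> exists a', N (f (c * a') - 1).
Proof.
move=> HN Ne.
have [p [mp rp]] := fint d.
set e := f c * d - 1 in Ne.
set n := (size p).-1.
have sp : size p = n.+1.
  by rewrite /n prednK // size_poly_gt0 monic_neq0.
have ln : p`_n = 1 by move: mp => /monicP; rewrite lead_coefE.
set s := \sum_(i < n) p`_i * c ^+ (n - i.+1).
exists (- s).
have h0 : f c ^+ n * (map_poly f p).[d] = 0.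
  by move: rp => /rootP ->; rewrite mulr0.
rewrite (horner_coef_wide _ (n := n.+1)) in h0; last first.
  by rewrite size_map_inj_poly ?rmorph0 // sp.
rewrite mulr_sumr in h0.
have eq1 : forall i : 'I_n.+1, f c ^+ n * ((map_poly f p)`_i * d ^+ i) =
   f (p`_i * c ^+ (n - i)) + f (p`_i) * f c ^+ (n - i) * ((f c * d) ^+ i - 1).
  move=> i; rewrite coef_map /= rmorphM rmorphXn /=.
  have hi : (i <= n)%N by rewrite -ltnS ltn_ord.
  rewrite mulrBr mulr1 addrCA subrr addr0 exprMn.
  rewrite -{1}(subnK hi) exprD.
  by rewrite mulrCA !mulrA.
rewrite (eq_bigr _ (fun i _ => eq1 i)) big_split /= -rmorph_sum in h0.
have N2 : N (\sum_(i < n.+1) f (p`_i) * f c ^+ (n - i) * ((f c * d) ^+ i - 1)).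
  apply: ideal_sum => // i; rewrite subrX1 mulrA; apply: ideal_mulr => //.
  case: (HN) => _ _ Hm; exact: Hm.
have N1 : N (f (\sum_(i < n.+1) p`_i * c ^+ (n - i))).
  move/eqP: h0; rewrite addr_eq0 => /eqP ->; exact: ideal_opp.
rewrite big_ord_recr /= ln subnn expr0 mulr1 in N1.
have E : \sum_(i < n) p`_(widen_ord (leqnSn n) i) * c ^+ (n - i) = c * s.
  rewrite /s mulr_sumr; apply: eq_bigr => i _ /=.
  by rewrite -(subnSK (ltn_ord i)) exprS mulrCA.
rewrite E in N1.
have -> : f (c * - s) - 1 = - f (c * s + 1) by rewrite rmorphD rmorph1 mulrN rmorphN opprD.
exact: ideal_opp.
Qed.

Lemma unit_iff (a : A) : is_unit a <-> is_unit (f a).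
Proof.
split.
  by case=> y ay; exists (f y); rewrite -rmorphM ay rmorph1.
case=> d ad.
have HN : is_ideal (fun x : B => x = 0).
  split => //; first by move=> x y -> ->; rewrite addr0.
  by move=> r x ->; rewrite mulr0.
have [a' Ha] : exists a', f (a * a') - 1 = 0.
  by apply: (key (d:=d) HN); rewrite /= ad subrr.
exists a'; apply: finj; rewrite rmorph1; apply/eqP; rewrite -subr_eq0; exact/eqP.
Qed.

Lemma contract_max (N : B -> Prop) :
  is_maximal_ideal N -> is_maximal_ideal (fun x => N (f x)).
Proof.
case=> HN N1 Nmax.
have HI : is_ideal (fun x => N (f x)).
  case: (HN) => N0 Na Nm; split.
  - by rewrite rmorph0.
  - by move=> x y Hx Hy; rewrite rmorphD; apply: Na.
  - by move=> r x Hx; rewrite rmorphM; apply: Nm.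
split => //; first by rewrite rmorph1.
move=> I HIi NI; case: (classic (forall x, I x -> N (f x))) => [H|]; first by right.
move=> Hn; have [x Hx] := not_all_ex_not _ _ Hn; have [Ix nx] := imply_to_and _ _ Hx; left.
pose N' := fun y => exists n b, N n /\ y = n + b * f x.
have HN' : is_ideal N'.
  case: (HN) => N0 Na Nm; split.
  - by exists 0, 0; rewrite mul0r addr0.
  - move=> y z [n [b [Nn ->]]] [n' [b' [Nn' ->]]]; exists (n + n'), (b + b'); split.
      exact: Na.
    by rewrite mulrDl addrACA.
  - move=> r y [n [b [Nn ->]]]; exists (r * n), (r * b); split; first exact: Nm.
    by rewrite mulrDr mulrA.
have [N'1|N'N] := Nmax N' HN' (fun y Ny => ex_intro _ y (ex_intro _ 0 (conj Ny (esym (etrans (congr1 (fun z => y + z) (mul0r (f x))) (addr0 y)))))).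
  case: N'1 => n [b [Nn E]].
  have [a' Ha'] : exists a', N (f (x * a') - 1).
    apply: (key (d:=b) (proj1 (conj HN HN))).
    have -> : f x * b - 1 = - n by rewrite E opprD addrA [f x * b]mulrC addrAC subrr add0r.
    exact: ideal_opp.
  have H1 : I (x * a' - 1) by apply: NI; rewrite rmorphB rmorph1.
  have -> : (1 : A) = x * a' - (x * a' - 1) by rewrite opprB addrCA subrr addr0.
  apply: ideal_sub => //; exact: ideal_mulr.
exfalso; apply: nx; apply: N'N; exists 0, 1; split; first by case: HN.
by rewrite mul1r add0r.
Qed.




Lemma jac_iff (a : A) : jacobson a <-> jacobson (f a).
Proof.
split.
  move=> Ja N HN; exact: (Ja _ (contract_max HN)).
move=> Jfa M HM; apply: NNPP => nMa.
case: (HM) => HI M1 Mmax.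
pose M' := fun y => exists m r, M m /\ y = m + r * a.
have HM' : is_ideal M'.
  case: (HI) => M0 Ma Mm; split.
  - by exists 0, 0; rewrite mul0r addr0.
  - move=> y z [n [b [Nn ->]]] [n' [b' [Nn' ->]]]; exists (n + n'), (b + b'); split.
      exact: Ma.
    by rewrite mulrDl addrACA.
  - move=> r y [n [b [Nn ->]]]; exists (r * n), (r * b); split; first exact: Mm.
    by rewrite mulrDr mulrA.
have [M'1|M'M] := Mmax M' HM' (fun y My => ex_intro _ y (ex_intro _ 0 (conj My (esym (etrans (congr1 (fun z => y + z) (mul0r a)) (addr0 y)))))).
  case: M'1 => m [r [Mm E]].
  have J : jacobson (f (- (r * a))).
    rewrite rmorphN rmorphM /=; apply: (ideal_opp (@jacobson_ideal B)).
    by case: (@jacobson_ideal B) => _ _ Hm; apply: Hm.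
  have U := unit_add_jac (@unit1 B) J.
  rewrite -(rmorph1 f) -rmorphD in U.
  move/unit_iff: U; have -> : 1 - r * a = m by rewrite E addrK.
  move=> Um; apply: M1; exact: ideal_unit_one HI Mm Um.
apply: nMa; apply: M'M; exists 0, 1; split; first by case: HI.
by rewrite mul1r add0r.
Qed.

End Integral.

Theorem corollary9p19 (A B : comNzRingType) (f : {rmorphism A -> B}) :
  injective f -> integral_over f -> sublocalizable B ->
  sublocalizable A /\
  local_subring_with_max (@sublocalization A) (@jacobson A) /\
  [/\       (forall a : A, sublocalization a <-> one_hull (@is_unit A) a),
      (forall a : A, one_hull (@is_unit A) a <-> one_hull (@is_unit B) (f a)),
      (forall a : A, jacobson a <-> jacobson (f a)) &
      (forall a : A, is_unit a <-> is_unit (f a))].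
Proof.
move=> finj fint HB.
have HA : sublocalizable A.
  split; first exact: oner_neq0.
  move=> u v /(unit_iff finj fint) Uu /(unit_iff finj fint) Uv.
  case: HB => _ /(_ _ _ Uu Uv); rewrite -rmorphD.
  by case=> [/(unit_iff finj fint)|/(jac_iff finj fint)]; [left|right].
split => //; split; first exact: subloc_ring.
split.
- exact: subloc_hull.
- move=> a; rewrite -(subloc_hull HA) -(subloc_hull HB).
  rewrite /sublocalization (unit_iff finj fint) (jac_iff finj fint); done.
- exact: jac_iff.
- exact: unit_iff.
Qed.
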